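(* Let $(X,\mathcal{U})$ be a sequentially complete separated uniform space, with $\mathcal{F}$ and $\mathcal{V}$ as in the context, and let $\preceq$ be a partial order on $X$ with the property: if a nondecreasing sequence $\{x_n\}$ (i.e. $x_n\preceq x_{n+1}$ for all $n$) converges to some $x\in X$, then it has a subsequence $\{x_{n_k}\}$ with $x_{n_k}\preceq x$ for all $k\ge1$. Let $T:X\to X$ be a nondecreasing order Ćirić-contraction. Then $T$ has a fixed point if and only if there exists $x_0\in X$ with $x_0\preceq Tx_0$. Moreover, this fixed point is unique if (i) the functions $a_2$ and $a_3$ in the contractive condition coincide on $X\times X$; and (ii) each two elements of $X$ have either a lower or an upper bound.
   Context: A uniform space $(X,\mathcal{U})$ is a nonempty set $X$ with a uniformity $\mathcal{U}$ on $X$. For $U,V\subseteq X\times X$, $\Delta(X)=\{(x,x):x\in X\}$ and $U\circ V=\{(x,y):\exists z\in X,\ (x,z)\in V,\ (z,y)\in U\}$. $X$ is separated if $\bigcap\mathcal{U}=\Delta(X)$. A sequence $\{x_n\}$ converges to $x$ if for every $U\in\mathcal{U}$ there is $N$ with $(x_n,x)\in U$ for $n\ge N$; it is Cauchy if for every $U\in\mathcal{U}$ there is $N$ with $(x_m,x_n)\in U$ for $m,n\ge N$; $X$ is sequentially complete if every Cauchy sequence converges. $\mathcal{F}$ is a nonempty collection of (uniformly continuous) pseudometrics on $X$ generating $\mathcal{U}$, and $\mathcal{V}$ is the family of all sets $V=\bigcap_{i=1}^m\{(x,y)\in X\times X:\rho_i(x,y)<r_i\}$ with $m\ge1$, $\rho_i\in\mathcal{F}$,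 $r_i>0$; $\mathcal{V}$ is a base for $\mathcal{U}$. For such $V$ and $\beta>0$, $\beta V=\bigcap_{i=1}^m\{(x,y):\rho_i(x,y)<\beta r_i\}$. A map $T:X\to X$ is a nondecreasing order Ćirić-contraction if (a) $x\preceq y$ implies $Tx\preceq Ty$; and (b) there are positive-valued functions $a_1,a_2,a_3,a_4$ on $X\times X$ with $\sup\{a_1(x,y)+a_2(x,y)+a_3(x,y)+2a_4(x,y):x,y\in X\}<1$ such that for all $x,y\in X$ with $x\preceq y$ and all $V_1,\dots,V_5\in\mathcal{V}$: if $(x,y)\in V_1$, $(x,Tx)\in V_2$, $(y,Ty)\in V_3$, $(x,Ty)\in V_4$, $(y,Tx)\in V_5$, then $(Tx,Ty)\in a_1(x,y)V_1\circ a_2(x,y)V_2\circ a_3(x,y)V_3\circ a_4(x,y)V_4\circ a_4(x,y)V_5$. *)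

(* Defs.v *)
From Stdlib Require Import Reals List.
Open Scope R_scope.

Definition rel (X : Type) := X -> X -> Prop.

Definition is_pseudometric {X : Type} (d : X -> X -> R) : Prop :=
  (forall x, d x x = 0) /\ (forall x y, 0 <= d x y) /\
  (forall x y, d x y = d y x) /\
  (forall x y z, d x z <= d x y + d y z).

Definition rcomp {X : Type} (U V : rel X) : rel X :=
  fun x y => exists z, V x z /\ U z y.

(* A basic entourage V in the family 𝒱 is given by a data list
   [(rho_1,r_1); ...; (rho_m,r_m)] with m >= 1, rho_i in F, r_i > 0. *)
Definition Vdata {X : Type} (F : (X -> X -> R) -> Prop)
  (l : list ((X -> X -> R) * R)) : Prop :=
  l <> nil /\ (forall p, In p l -> F (fst p) /\ 0 < snd p).

(* beta V = intersection of {(x,y) : rho_i(x,y) < beta r_i};  V = 1 V. *)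
Definition scaledV {X : Type} (beta : R) (l : list ((X -> X -> R) * R)) : rel X :=
  fun x y => forall p, In p l -> fst p x y < beta * snd p.

Definition basicV {X : Type} (l : list ((X -> X -> R) * R)) : rel X :=
  scaledV 1 l.

(* The uniformity 𝒰 generated by F: 𝒱 is a base of 𝒰. *)
Definition entourage {X : Type} (F : (X -> X -> R) -> Prop) (E : rel X) : Prop :=
  exists l, Vdata F l /\ (forall x y, basicV l x y -> E x y).

Definition separated {X : Type} (F : (X -> X -> R) -> Prop) : Prop :=
  forall x y, (forall E, entourage F E -> E x y) <-> x = y.

Definition converges {X : Type} (F : (X -> X -> R) -> Prop)
  (u : nat -> X) (x : X) : Prop :=
  forall E, entourage F E -> exists N, forall n, (N <= n)%nat -> E (u n) x.

Definition cauchy {X : Type} (F : (X -> X -> R) -> Prop) (u : nat -> X) : Prop :=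
  forall E, entourage F E ->
    exists N, forall m n, (N <= m)%nat -> (N <= n)%nat -> E (u m) (u n).

Definition seq_complete {X : Type} (F : (X -> X -> R) -> Prop) : Prop :=
  forall u, cauchy F u -> exists x, converges F u x.

Definition partial_order {X : Type} (le : rel X) : Prop :=
  (forall x, le x x) /\ (forall x y, le x y -> le y x -> x = y) /\
  (forall x y z, le x y -> le y z -> le x z).

Definition order_limit_property {X : Type} (F : (X -> X -> R) -> Prop)
  (le : rel X) : Prop :=
  forall (u : nat -> X) (x : X),
    (forall n, le (u n) (u (S n))) -> converges F u x ->
    exists phi : nat -> nat, (forall k, (phi k < phi (S k))%nat) /\
      (forall k, le (u (phi k)) x).

Definition ciric_contraction {X : Type} (F : (X -> X -> R) -> Prop)
  (le : rel X) (T : X -> X) (a1 a2 a3 a4 : X -> X -> R) : Prop :=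
  (forall x y, le x y -> le (T x) (T y)) /\
  (forall x y, 0 < a1 x y /\ 0 < a2 x y /\ 0 < a3 x y /\ 0 < a4 x y) /\
  (exists c, c < 1 /\ forall x y, a1 x y + a2 x y + a3 x y + 2 * a4 x y <= c) /\
  (forall x y, le x y ->
   forall l1 l2 l3 l4 l5,
     Vdata F l1 -> Vdata F l2 -> Vdata F l3 -> Vdata F l4 -> Vdata F l5 ->
     basicV l1 x y -> basicV l2 x (T x) -> basicV l3 y (T y) ->
     basicV l4 x (T y) -> basicV l5 y (T x) ->
     rcomp (scaledV (a1 x y) l1)
       (rcomp (scaledV (a2 x y) l2)
         (rcomp (scaledV (a3 x y) l3)
           (rcomp (scaledV (a4 x y) l4) (scaledV (a4 x y) l5)))) (T x) (T y)).

(* Main.v *)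
Require Import Defs.
From Stdlib Require Import Reals List Lra Lia Psatz.
Open Scope R_scope.

Fixpoint it {X : Type} (T : X -> X) (n : nat) (x : X) : X :=
  match n with O => x | S k => T (it T k x) end.

Lemma ent_rho {X : Type} (F : (X->X->R)->Prop) rho r :
  F rho -> 0 < r -> entourage F (fun x y => rho x y < r).
Proof.
  intros Hr Hpos. exists ((rho, r) :: nil). split.
  - split; [discriminate|]. intros p [<-|[]]; simpl; auto.
  - intros x y H. specialize (H (rho,r) (or_introl eq_refl)). simpl in H. lra.
Qed.

Lemma zero_eq {X : Type} (F : (X->X->R)->Prop) x y :
  separated F -> (forall rho, F rho -> rho x y = 0) -> x = y.
Proof.
  intros Hsep H0. apply (proj1 (Hsep x y)). intros E [l [[_ Hl] HE]].
  apply HE. intros p Hp. destruct (Hl p Hp) as [Hp1 Hp2].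
  rewrite (H0 _ Hp1). lra.
Qed.

Lemma ratio p q c d d' : 0 <= p -> 0 <= q -> p + q <= c -> c < 1 -> 0 <= d ->
  d' <= p*d + q*d' -> d' <= c*d.
Proof.
  intros. assert (p*d <= (c-q)*d) by nra.
  assert (0 <= q*d*(1-c)) by (apply Rmult_le_pos; nra).
  destruct (Rle_dec d' (c*d)) as [|Hn]; auto.
  assert (0 < (d'-c*d)*(1-q)) by (apply Rmult_lt_0_compat; lra). nra.
Qed.

Lemma geo (s : nat -> R) c : (forall n, s (S n) <= c * s n) -> 0 <= c ->
  forall n, s n <= c ^ n * s O.
Proof.
  intros H Hc n. induction n; simpl. lra.
  specialize (H n). nra.
Qed.

Lemma pow_small c M eps : 0 <= c -> c < 1 -> 0 <= M -> 0 < eps ->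
  exists N, forall n, (N <= n)%nat -> c ^ n * M < eps.
Proof.
  intros. destruct (pow_lt_1_zero c) with (y := eps / (M+1)) as [N HN].
  rewrite Rabs_right; lra. apply Rdiv_lt_0_compat; lra.
  exists N. intros n Hn. specialize (HN n Hn). rewrite Rabs_right in HN.
  2: { apply Rle_ge, pow_le; lra. }
  assert (c^n * (M+1) < eps / (M+1) * (M+1)) by (apply Rmult_lt_compat_r; lra).
  replace (eps / (M+1) * (M+1)) with eps in H3 by (field; lra).
  assert (0 <= c^n) by (apply pow_le; lra). nra.
Qed.

Lemma list_ev {A : Type} (l : list A) (Q : A -> nat -> nat -> Prop) :
  (forall a, In a l -> exists N, forall m n, (N<=m)%nat -> (N<=n)%nat -> Q a m n) ->
  exists N, forall m n, (N<=m)%nat -> (N<=n)%nat -> forall a, In a l -> Q a m n.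
Proof.
  induction l as [|b l IH]; intros H.
  - exists O. intros _ _ _ _ a [].
  - destruct (H b (or_introl eq_refl)) as [N1 H1].
    destruct IH as [N2 H2]. { intros a Ha. apply H. right; auto. }
    exists (max N1 N2). intros m n Hm Hn a [<-|Ha].
    + apply H1; lia.
    + apply H2; auto; lia.
Qed.

Lemma cauchy_rho {X : Type} (u : nat -> X) rho c :
  is_pseudometric rho -> 0 < c -> c < 1 ->
  (forall k, rho (u (S k)) (u (S (S k))) <= c * rho (u k) (u (S k))) ->
  forall r, 0 < r -> exists N, forall m n, (N <= m)%nat -> (N <= n)%nat -> rho (u m) (u n) < r.
Proof.
  intros [h0 [hp [hs ht]]] Hc0 Hc1 Hk r Hr.
  set (D := rho (u O) (u (S O))).
  assert (Hg : forall k, rho (u k) (u (S k)) <= c ^ k * D).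
  { apply (geo (fun k => rho (u k) (u (S k)))); auto; lra. }
  assert (Hcl : forall m j, (1-c) * rho (u m) (u (m+j)%nat) <= c^m * D * (1 - c^j)).
  { intros m j. induction j.
    - rewrite Nat.add_0_r, h0. simpl. lra.
    - rewrite Nat.add_succ_r.
      assert (T1 := ht (u m) (u (m+j)%nat) (u (S (m+j)))).
      assert (T2 := Hg (m+j)%nat). rewrite pow_add in T2.
      assert ((1-c) * rho (u m) (u (S (m+j))) <= (1-c) * (rho (u m) (u (m + j)%nat) + rho (u (m + j)%nat) (u (S (m + j))))) by (apply Rmult_le_compat_l; lra).
      assert ((1-c) * rho (u (m + j)%nat) (u (S (m + j))) <= (1-c) * (c^m * c^j * D)) by (apply Rmult_le_compat_l; lra).
      simpl. lra. }
  assert (HD : 0 <= D) by apply hp.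
  destruct (pow_small c D (r*(1-c))) as [N HN]; try lra. apply Rmult_lt_0_compat; lra.
  exists N. intros m n Hm Hn.
  assert (key : forall m j, (N <= m)%nat -> rho (u m) (u (m+j)%nat) < r).
  { intros m' j Hm'. specialize (Hcl m' j). specialize (HN m' Hm').
    assert (0 <= c^m' * D * c^j).
    { apply Rmult_le_pos. apply Rmult_le_pos; auto. apply pow_le; lra. apply pow_le; lra. }
    assert ((1-c) * rho (u m') (u (m'+j)%nat) < (1-c) * r) by lra.
    apply Rmult_lt_reg_l in H0; lra. }
  destruct (Nat.le_ge_cases m n) as [Hmn|Hmn].
  - replace n with (m + (n-m))%nat by lia. apply key; auto.
  - rewrite hs. replace m with (n + (m-n))%nat by lia. apply key; auto.
Qed.

Lemma cineq {X : Type} F (le : rel X) T a1 a2 a3 a4 :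
  (forall rho, F rho -> is_pseudometric rho) -> ciric_contraction F le T a1 a2 a3 a4 ->
  forall rho, F rho -> forall x y, le x y ->
  rho (T x) (T y) <= a1 x y * rho x y + a2 x y * rho x (T x) + a3 x y * rho y (T y)
     + a4 x y * (rho x (T y) + rho y (T x)).
Proof.
  intros HF [Hm [Hpos [[c [Hc1 Hcs]] Hcon]]] rho Hr x y Hxy.
  destruct (HF rho Hr) as [h0 [hp [hs ht]]].
  destruct (Hpos x y) as [p1 [p2 [p3 p4]]]. specialize (Hcs x y).
  apply Rle_plus_epsilon. intros e He.
  set (mk := fun r : R => (rho, r) :: nil).
  assert (Vd : forall r, 0 < r -> Vdata F (mk r)).
  { intros r H; split; [discriminate|]. intros p [<-|[]]; simpl; auto. }
  assert (Bv : forall a b r, rho a b < r -> basicV (mk r) a b).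
  { intros a b r H p [<-|[]]; simpl; lra. }
  assert (Sv : forall s a b r, scaledV s (mk r) a b -> rho a b < s * r).
  { intros s a b r H. exact (H (rho, r) (or_introl eq_refl)). }
  assert (q1 := hp x y). assert (q2 := hp x (T x)). assert (q3 := hp y (T y)).
  assert (q4 := hp x (T y)). assert (q5 := hp y (T x)).
  specialize (Hcon x y Hxy (mk (rho x y + e)) (mk (rho x (T x) + e)) (mk (rho y (T y) + e))
     (mk (rho x (T y) + e)) (mk (rho y (T x) + e))
     ltac:(apply Vd; lra) ltac:(apply Vd; lra) ltac:(apply Vd; lra) ltac:(apply Vd; lra)
     ltac:(apply Vd; lra) ltac:(apply Bv; lra) ltac:(apply Bv; lra) ltac:(apply Bv; lra)
     ltac:(apply Bv; lra) ltac:(apply Bv; lra)).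
  destruct Hcon as [z1 [[z2 [[z3 [[z4 [H5 H4]] H3]] H2]] H1]].
  apply Sv in H1. apply Sv in H2. apply Sv in H3. apply Sv in H4. apply Sv in H5.
  assert (t1 := ht (T x) z4 (T y)). assert (t2 := ht z4 z3 (T y)).
  assert (t3 := ht z3 z2 (T y)). assert (t4 := ht z2 z1 (T y)).
  assert (e * (a1 x y + a2 x y + a3 x y + 2 * a4 x y) <= e) by nra.
  lra.
Qed.

Lemma uniq_core {X : Type} F (w : nat -> X) u v c :
  (forall rho, F rho -> is_pseudometric rho) -> separated F -> 0 < c -> c < 1 ->
  (forall rho, F rho -> forall n, rho (w (S n)) u <= c * rho (w n) u) ->
  (forall rho, F rho -> forall n, rho (w (S n)) v <= c * rho (w n) v) -> u = v.
Proof.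
  intros HF Hsep Hc0 Hc1 Hu Hv. apply (zero_eq F); auto.
  intros rho Hr. destruct (HF rho Hr) as [h0 [hp [hs ht]]].
  assert (gu := geo (fun n => rho (w n) u) c (Hu rho Hr) ltac:(lra)).
  assert (gv := geo (fun n => rho (w n) v) c (Hv rho Hr) ltac:(lra)). simpl in gu, gv.
  apply Rle_antisym; [|apply hp].
  apply Rle_plus_epsilon. intros e He.
  assert (0 <= rho (w O) u + rho (w O) v) by (pose proof (hp (w O) u); pose proof (hp (w O) v); lra).
  destruct (pow_small c _ e ltac:(lra) Hc1 H He) as [N HN].
  specialize (HN N (le_n _)). specialize (gu N). specialize (gv N).
  assert (t := ht u (w N) v). rewrite (hs u (w N)) in t. lra.
Qed.

Theorem corollary2 (X : Type) (F : (X -> X -> R) -> Prop)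
  (le : X -> X -> Prop) (T : X -> X) (a1 a2 a3 a4 : X -> X -> R) :
  inhabited X ->
  (exists rho, F rho) ->
  (forall rho, F rho -> is_pseudometric rho) ->
  separated F ->
  seq_complete F ->
  partial_order le ->
  order_limit_property F le ->
  ciric_contraction F le T a1 a2 a3 a4 ->
  ((exists x, T x = x) <-> (exists x0, le x0 (T x0))) /\
  ((forall x y, a2 x y = a3 x y) ->
   (forall x y, (exists z, le z x /\ le z y) \/ (exists z, le x z /\ le y z)) ->
   forall u v, T u = u -> T v = v -> u = v).
Proof.
  intros [w0] _ HF Hsep Hcomp [Hrefl [Hanti Htrans]] Hol Hcc.
  assert (Hcc' := Hcc).
  destruct Hcc' as [Hm [Hpos [[c [Hc1 Hcs]] _]]].
  assert (Hc0 : 0 < c).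
  { destruct (Hpos w0 w0) as [p1 [p2 [p3 p4]]]. specialize (Hcs w0 w0). lra. }
  assert (CI := cineq F le T a1 a2 a3 a4 HF Hcc).
  split.
  - split.
    + intros [x Hx]. exists x. rewrite Hx. apply Hrefl.
    + intros [x0 Hx0].
      set (u := fun n => it T n x0).
      assert (Hmon : forall n, le (u n) (u (S n))).
      { induction n. exact Hx0. apply Hm. exact IHn. }
      assert (Hgeo : forall rho, F rho -> forall k,
        rho (u (S k)) (u (S (S k))) <= c * rho (u k) (u (S k))).
      { intros rho Hr k. destruct (HF rho Hr) as [h0 [hp [hs ht]]].
        assert (I := CI rho Hr (u k) (u (S k)) (Hmon k)). change (T (u k)) with (u (S k)) in I.
        change (T (u (S k))) with (u (S (S k))) in I. rewrite h0 in I.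
        destruct (Hpos (u k) (u (S k))) as [p1 [p2 [p3 p4]]]. specialize (Hcs (u k) (u (S k))).
        assert (t := ht (u k) (u (S k)) (u (S (S k)))).
        assert (a4 (u k) (u (S k)) * rho (u k) (u (S (S k))) <= a4 (u k) (u (S k)) * (rho (u k) (u (S k)) + rho (u (S k)) (u (S (S k))))) by (apply Rmult_le_compat_l; lra).
        apply (ratio (a1 (u k) (u (S k)) + a2 (u k) (u (S k)) + a4 (u k) (u (S k)))
                     (a3 (u k) (u (S k)) + a4 (u k) (u (S k)))); try lra. apply hp. }
      assert (Hcau : cauchy F u).
      { intros E [l [[_ Hl] HE]].
        destruct (list_ev l (fun p m n => fst p (u m) (u n) < snd p)) as [N HN].
        { intros p Hp. destruct (Hl p Hp) as [Hp1 Hp2].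
          apply (cauchy_rho u (fst p) c (HF _ Hp1) Hc0 Hc1 (Hgeo _ Hp1)); auto. }
        exists N. intros m n Hm' Hn'. apply HE. intros p Hp. rewrite Rmult_1_l.
        apply HN; auto. }
      destruct (Hcomp u Hcau) as [xs Hxs].
      destruct (Hol u xs Hmon Hxs) as [phi [Hphi Hle]].
      assert (Hphik : forall k, (k <= phi k)%nat).
      { induction k. lia. specialize (Hphi k). lia. }
      exists xs. symmetry. apply (zero_eq F); auto.
      intros rho Hr. destruct (HF rho Hr) as [h0 [hp [hs ht]]].
      apply Rle_antisym; [|apply hp].
      apply Rle_plus_epsilon. intros eps Heps.
      set (D := rho xs (T xs)).
      set (delta := eps * (1 - c) / 6).
      assert (Hd : 0 < delta) by (unfold delta; apply Rdiv_lt_0_compat; nra).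
      destruct (Hxs _ (ent_rho F rho delta Hr Hd)) as [N HN].
      set (n := phi N).
      assert (e1 := HN n ltac:(specialize (Hphik N); unfold n; lia)).
      assert (e2 := HN (S n) ltac:(specialize (Hphik N); unfold n; lia)).
      simpl in e1, e2.
      assert (I := CI rho Hr (u n) xs (Hle N)). change (T (u n)) with (u (S n)) in I.
      destruct (Hpos (u n) xs) as [p1 [p2 [p3 p4]]]. specialize (Hcs (u n) xs).
      set (b1 := a1 (u n) xs) in *. set (b2 := a2 (u n) xs) in *.
      set (b3 := a3 (u n) xs) in *. set (b4 := a4 (u n) xs) in *.
      assert (t1 := ht xs (u (S n)) (T xs)).
      assert (t2 := ht (u n) xs (u (S n))).
      assert (t3 := ht (u n) xs (T xs)).
      rewrite (hs xs (u (S n))) in t1, t2, I.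
      fold D in t1, t3, I.
      assert (b2 * rho (u n) (u (S n)) <= b2 * (2*delta)) by (apply Rmult_le_compat_l; lra).
      assert (b4 * (rho (u n) (T xs) + rho (u (S n)) xs) <= b4 * (D + 2*delta)).
      { apply Rmult_le_compat_l; lra. }
      assert (b1 * rho (u n) xs <= b1 * delta) by (apply Rmult_le_compat_l; lra).
      assert (HD : 0 <= D) by apply hp.
      assert (D * (1 - c) <= D * (1 - b3 - b4)) by (apply Rmult_le_compat_l; lra).
      assert (D * (1 - b3 - b4) <= delta * (1 + b1 + 2*b2 + 2*b4)) by lra.
      assert (delta * (1 + b1 + 2*b2 + 2*b4) <= delta * 3) by (apply Rmult_le_compat_l; lra).
      assert (D * (1-c) <= eps * (1 - c) / 2) by (unfold delta in *; lra).
      nra.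
  - intros Ha23 Hbd u v Hu Hv.
    destruct (Hbd u v) as [[z [Hzu Hzv]] | [z [Hzu Hzv]]].
    + set (w := fun n => it T n z).
      assert (Hw : forall y, T y = y -> le z y -> forall rho, F rho -> forall n,
                rho (w (S n)) y <= c * rho (w n) y).
      { intros y Hy Hzy rho Hr n. destruct (HF rho Hr) as [h0 [hp [hs ht]]].
        assert (Hl : le (w n) y).
        { induction n. exact Hzy. simpl. rewrite <- Hy. apply Hm. exact IHn. }
        assert (I := CI rho Hr (w n) y Hl). change (T (w n)) with (w (S n)) in I.
        rewrite Hy, h0 in I.
        destruct (Hpos (w n) y) as [p1 [p2 [p3 p4]]]. specialize (Hcs (w n) y).
        rewrite Ha23 in Hcs, p2, I.
        assert (t := ht (w n) y (w (S n))). rewrite (hs y (w (S n))) in t, I.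
        assert (a3 (w n) y * rho (w n) (w (S n)) <= a3 (w n) y * (rho (w n) y + rho (w (S n)) y)) by (apply Rmult_le_compat_l; lra).
        apply (ratio (a1 (w n) y + a3 (w n) y + a4 (w n) y) (a3 (w n) y + a4 (w n) y));
          try lra. apply hp. }
      apply (uniq_core F w u v c); auto.
    + set (w := fun n => it T n z).
      assert (Hw : forall y, T y = y -> le y z -> forall rho, F rho -> forall n,
                rho (w (S n)) y <= c * rho (w n) y).
      { intros y Hy Hzy rho Hr n. destruct (HF rho Hr) as [h0 [hp [hs ht]]].
        assert (Hl : le y (w n)).
        { induction n. exact Hzy. simpl. rewrite <- Hy. apply Hm. exact IHn. }
        assert (I := CI rho Hr y (w n) Hl). change (T (w n)) with (w (S n)) in I.
        rewrite Hy, h0 in I.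
        destruct (Hpos y (w n)) as [p1 [p2 [p3 p4]]]. specialize (Hcs y (w n)).
        rewrite Ha23 in Hcs, p2, I.
        assert (t := ht (w n) y (w (S n))). rewrite (hs y (w (S n))) in I.
        rewrite (hs y (w n)) in I.
        assert (a3 y (w n) * rho (w n) (w (S n)) <= a3 y (w n) * (rho (w n) y + rho y (w (S n)))) by (apply Rmult_le_compat_l; lra).
        rewrite (hs y (w (S n))) in H.
        apply (ratio (a1 y (w n) + a3 y (w n) + a4 y (w n)) (a3 y (w n) + a4 y (w n)));
          try lra. apply hp. }
      apply (uniq_core F w u v c); auto.
Qed.
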